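(* Let $i,j\in[s]$ (equal or not). Every homomorphism from $F_i^{\bullet\bullet}$ to $F_j^{\bullet\bullet}$ (both viewed as ordinary digraphs), if one exists, is a bijection $V(F_i^{\bullet\bullet})\to V(F_j^{\bullet\bullet})$.
   Context: All digraphs are finite and loopless; a tournament is a digraph in which every pair of distinct vertices is joined by exactly one arc. A homomorphism from a digraph $F$ to a digraph $H$ is a map $\varphi:V(F)\to V(H)$ with $(\varphi(u),\varphi(v))\in E(H)$ whenever $(u,v)\in E(F)$. Construction of $F_i^{\bullet\bullet}$: fix $s\in\mathbb{N}^+$, a positive integer $m$, and a tournament $F_0$ on vertex set $[m]$ satisfying: (I) every vertex has out-degree and in-degree at most $2m/3$; (II) there are no disjoint $A_1,A_2\subseteq[m]$ with $|A_1|=|A_2|=\lceil\sqrt m\,\rceil$ such that $(a_1,a_2)$ is an arc for all $a_1\in A_1,a_2\in A_2$; (III) for every $S\subseteq[m]$ with $|S|\ge 2m/13-\sqrt m$, $F_0[S]$ contains a directed cycle. Let $k_1,\dots,k_s$ be integers in the open interval $(2m/3+2,\,5m/6)$ with $k_i>k_{i+1}+1$ for $1\le i<s$. For $i\in[s]$, $F_i^{\bullet\bullet}$ is the digraph on vertex set $[m]\cup\{z_i,w_i\}$ ($z_i,w_i$ two new vertices, called roots) whose arcs are all arcs of $F_0$, together with the arcs $z_i\to v$ and $v\to w_i$ for every $1\le v\le k_i$, and the arcs $u\to z_i$ and $w_i\to u$ for every $k_i<u\le m$. There is no arc between $z_i$ and $w_i$. *)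

(* Defs.v *)
From mathcomp Require Import all_boot.
From Stdlib Require Import Reals.

Set Implicit Arguments.
Unset Strict Implicit.
Unset Printing Implicit Defensive.

(* Vertex [m] = {1,..,m} is encoded by 'I_m : the ordinal v stands for the
   paper's vertex v+1.  The roots are added with a sum type:
   inr true = z_i, inr false = w_i. *)
Definition vtx (m : nat) : finType := ('I_m + bool)%type.
Definition zroot {m} : vtx m := inr true.
Definition wroot {m} : vtx m := inr false.

Definition tournament m (F : rel 'I_m) : Prop :=
  (forall u, ~~ F u u) /\
  (forall u v, u != v -> (F u v || F v u) && ~~ (F u v && F v u)).

(* ceil(sqrt m) : the least c with m <= c^2 (c = m always works). *)
Definition ceil_sqrt (m : nat) : nat := find (fun c => m <= c * c) (iota 0 m.+1).

Definition cond_I m (F : rel 'I_m) : Prop :=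
  forall u : 'I_m, 3 * #|[set v | F u v]| <= 2 * m /\ 3 * #|[set v | F v u]| <= 2 * m.

Definition cond_II m (F : rel 'I_m) : Prop :=
  ~ (exists A1 A2 : {set 'I_m},
       [/\ [disjoint A1 & A2], #|A1| = ceil_sqrt m, #|A2| = ceil_sqrt m &
           forall a1 a2, a1 \in A1 -> a2 \in A2 -> F a1 a2]).

Definition has_dcycle m (F : rel 'I_m) (S : {set 'I_m}) : Prop :=
  exists c : seq 'I_m, [/\ c != [::], uniq c, all (fun x => x \in S) c & cycle F c].

Definition cond_III m (F : rel 'I_m) : Prop :=
  forall S : {set 'I_m},
    (INR #|S| >= 2 * INR m / 13 - sqrt (INR m))%R -> has_dcycle F S.

(* The digraph F_i^{bullet bullet} with parameter k = k_i:
   z -> v and v -> w for v in {1..k}; u -> z and w -> u for k < u <= m. *)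
Definition Fbb m (F : rel 'I_m) (k : nat) : rel (vtx m) :=
  fun x y =>
    match x, y with
    | inl u, inl v => F u v
    | inr true, inl v => (v < k)%N
    | inl v, inr false => (v < k)%N
    | inl u, inr true => (k <= u)%N
    | inr false, inl u => (k <= u)%N
    | _, _ => false
    end.

Definition is_hom (T1 T2 : Type) (E1 : rel T1) (E2 : rel T2) (f : T1 -> T2) : Prop :=
  forall x y, E1 x y -> E2 (f x) (f y).

(* Main.v *)
Require Import Defs.
From mathcomp Require Import all_boot.
From Stdlib Require Import Reals Lia.
From mathcomp Require Import zify.

Lemma Fbb_irr m (F : rel 'I_m) k x : tournament F -> ~~ Fbb F k x x.
Proof. by case=> Hi _; case: x => [u|[]] //=; apply: Hi. Qed.

Lemma Fbb_asym m (F : rel 'I_m) k x y : tournament F -> ~~ (Fbb F k x y && Fbb F k y x).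
Proof.
move=> [Hi Ht]; case: x => [u|[]]; case: y => [v|[]] //=;
  try by case: ltnP.
case: (eqVneq u v) => [->|Huv]; first by rewrite (negbTE (Hi v)).
by case/andP: (Ht u v Huv).
Qed.

Lemma Fbb_adj m (F : rel 'I_m) k x y : tournament F -> x != y ->
  ~~ ((x == zroot) && (y == wroot) || (x == wroot) && (y == zroot)) ->
  Fbb F k x y || Fbb F k y x.
Proof.
move=> [Hi Ht]; case: x => [u|[]]; case: y => [v|[]] //=;
  try by rewrite ?orbT ?orbF; case: ltnP.
by move=> Huv _; case/andP: (Ht u v Huv).
Qed.

Theorem claim4p3 (s m : nat) (F0 : rel 'I_m) (k : nat -> nat) :
  0 < s -> 0 < m ->
  tournament F0 -> cond_I F0 -> cond_II F0 -> cond_III F0 ->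
  (forall i, 1 <= i <= s -> 2 * m + 6 < 3 * k i /\ 6 * k i < 5 * m) ->
  (forall i, 1 <= i < s -> k i.+1 + 1 < k i) ->
  forall i j, 1 <= i <= s -> 1 <= j <= s ->
  forall phi : vtx m -> vtx m,
    is_hom (Fbb F0 (k i)) (Fbb F0 (k j)) phi -> bijective phi.
Proof.
move=> _ m0 HT _ _ _ Hk _ i j Hi Hj phi Hphi.
have ki0 : leq 1 (k i) by case: (Hk i Hi) => H _; apply/leP; lia.
apply: injF_bij => x y Hxy; apply/eqP; apply/negPn/negP => Hne.
have zw : forall a b, a = zroot -> b = wroot -> phi a = phi b -> False.
  move=> a b -> -> E.
  pose v0 : vtx m := inl (Ordinal m0).
  have H1 := Hphi zroot v0 ki0; have H2 := Hphi v0 wroot ki0.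
  rewrite -E in H2.
  by move: (@Fbb_asym _ F0 (k j) (phi zroot) (phi v0) HT); rewrite H1 H2.
case: (boolP ((x == zroot) && (y == wroot) || (x == wroot) && (y == zroot))).
  case/orP=> /andP[/eqP ex /eqP ey]; first exact: (zw x y).
  by apply: (zw y x) => //.
move=> Hn; case/orP: (@Fbb_adj _ F0 (k i) _ _ HT Hne Hn) => /Hphi; rewrite Hxy;
  by rewrite (negbTE (@Fbb_irr _ F0 _ _ HT)).
Qed.
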